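(* Let $n\ge1$ and let $\Sigma=\begin{bmatrix}\Sigma_{11}&\Sigma_{12}\\\Sigma_{12}&\Sigma_{22}\end{bmatrix}$ be a positive definite $2\times2$ matrix with $cn\le\lambda_{\min}(\Sigma)\le\lambda_{\max}(\Sigma)\le Cn$ for constants $0<c\le C$. Let $Z\sim N(\mu,\Sigma)$ with $\mu=(\mu_1,\mu_2)$, let $r\ge1$ and $t=r\sqrt n$. Then $$\mathbb P\big(Z\in(-\infty,\mu_1-t]\times(-\infty,\mu_2-t]\big)\ge\alpha_r(c,C):=\big(\Phi(a)-\Phi(2a)\big)\,\Phi\!\Big(\frac{a(1+2\rho_0)}{\sqrt{1-\rho_0^2}}\Big),$$ where $a=-r/\sqrt c$ and $\rho_0=\sqrt{1-(c/C)^2}$.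
   Context: $\Phi(t)=\frac1{\sqrt{2\pi}}\int_{-\infty}^te^{-x^2/2}dx$ is the standard normal distribution function; $\lambda_{\min},\lambda_{\max}$ are the smallest and largest eigenvalues; $N(\mu,\Sigma)$ is the bivariate Gaussian with mean $\mu$ and covariance $\Sigma$. *)

(* Defs.v *)
From HB Require Import structures.
From mathcomp Require Import all_boot all_order all_algebra.
From mathcomp Require Import all_classical all_reals all_analysis.
Set Implicit Arguments. Unset Strict Implicit. Unset Printing Implicit Defensive.
Import Order.TTheory GRing.Theory Num.Theory.
Local Open Scope classical_set_scope.
Local Open Scope ring_scope.

Definition Phi {R : realType} (t : R) : R :=
  fine (normal_prob 0 1 `]-oo, t]).

Definition vec2 {R : realType} (z : R * R) : 'rV[R]_2 :=
  \row_(i < 2) (if i == ord0 then z.1 else z.2).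

Definition bivariate_normal_pdf {R : realType} (mu : 'rV[R]_2) (Sigma : 'M[R]_2)
    (z : R * R) : R :=
  let v := vec2 z - mu in
  expR (- ((v *m invmx Sigma *m v^T) ord0 ord0) / 2)
    / (pi *+ 2 * Num.sqrt (\det Sigma)).

Definition bivariate_normal_prob {R : realType} (mu : 'rV[R]_2) (Sigma : 'M[R]_2)
    (A : set (R * R)) : \bar R :=
  (\int[((@lebesgue_measure R) \x (@lebesgue_measure R))%E]_(z in A)
      (bivariate_normal_pdf mu Sigma z)%:E)%E.

Definition posdef {R : realType} (Sigma : 'M[R]_2) : Prop :=
  Sigma^T = Sigma /\ forall v : 'rV[R]_2, v != 0 -> 0 < (v *m Sigma *m v^T) ord0 ord0.

(* Main.v *)
Require Import Defs.
From HB Require Import structures.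
From mathcomp Require Import all_boot all_order all_algebra.
From mathcomp Require Import all_classical all_reals all_analysis.
From mathcomp Require Import ring lra measurable_realfun.
Import Order.TTheory GRing.Theory Num.Theory.
Import numFieldNormedType.Exports.
Local Open Scope classical_set_scope.
Local Open Scope ring_scope.

Section Helpers.
Variable R : realType.
Implicit Types m s T : R.

Lemma linF'E m s : ((fun x : R => (x - m) / s)^`())%classic = cst s^-1.
Proof.
apply/funext => x; rewrite derive1E deriveM// deriveD// derive_cst scaler0.
by rewrite add0r derive_id derive_cst addr0 scaler1.
Qed.

Lemma normal_prob_Ny m s T : 0 < s ->
  normal_prob m s `]-oo, T] = normal_prob 0 1 `]-oo, (T - m) / s].
Proof.
move=> s0.
pose F := fun x : R => (x - m) / s.
have := @increasing_ge0_integration_by_substitutionNy R F (normal_pdf 0 1) T.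
rewrite linF'E.
have cF : continuous F.
  move=> x; apply: cvgM; last exact: cvg_cst.
  by apply: cvgB; [exact: cvg_id|exact: cvg_cst].
change ((T - m) / s) with (F T); rewrite /normal_prob; move=> ->.
- apply: eq_integral => x _; congr EFin.
  rewrite /= !normal_pdfE ?oner_neq0 ?gt_eqF//.
  rewrite /= /normal_peak /normal_fun /F.
  have E1 : - (x - m) ^+ 2 / (s ^+ 2 *+ 2) = - ((x - m) / s - 0) ^+ 2 / (1 ^+ 2 *+ 2).
    by field; rewrite gt_eqF.
  have E2 : Num.sqrt (s ^+ 2 * pi *+ 2) = s * Num.sqrt (1 ^+ 2 * pi *+ 2).
    by rewrite expr1n mul1r -mulrnAr sqrtrM ?sqr_ge0// sqrtr_sqr gtr0_norm.
  rewrite E1 E2 invfM !fctE /= [RHS]mulrC mulrA.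
  done.
- by move=> x y _ _ xy; rewrite /F ltr_pM2r ?invr_gt0// ltrBlDr subrK.
- by move=> x _; exact: cvg_cst.
- exact: is_cvg_cst.
- exact: cvg_cst.
- split; last by apply: cvg_at_left_filter; exact: cF.
  move=> x _; rewrite /F; apply: derivableM; last exact: derivable_cst.
  apply: derivableB; [exact: derivable_id|exact: derivable_cst].
- apply/gt0_cvgMlNy; last exact: cvg_addrr_Ny.
  by rewrite invr_gt0.
- apply: continuous_subspaceT; apply: continuous_normal_pdf; exact: oner_neq0.
- by move=> x _; exact: normal_pdf_ge0.
Qed.

Lemma normal_Phi m s T : 0 < s ->
  normal_prob m s `]-oo, T] = (Phi ((T - m) / s))%:E.
Proof.
by move=> s0; rewrite normal_prob_Ny // /Phi fineK // fin_num_measure.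
Qed.

Lemma Phi_le (x y : R) : x <= y -> Phi x <= Phi y.
Proof.
move=> xy; rewrite /Phi fine_le ?fin_num_measure //.
apply: le_measure; rewrite ?inE //.
by move=> z /=; rewrite !in_itv /= => /le_trans; apply.
Qed.

Lemma Phi_ge0 (x : R) : 0 <= Phi x.
Proof. by rewrite /Phi fine_ge0 // measure_ge0. Qed.

Lemma normal_pdf_shift m s y : s != 0 ->
  normal_pdf 0 s (y - m) = normal_pdf m s y.
Proof. by move=> s0; rewrite !normal_pdfE // /normal_fun subr0. Qed.

Lemma normal_prob_itv m s b1 b2 : 0 < s -> b1 <= b2 ->
  normal_prob m s `]m + b1 * s, m + b2 * s] = (Phi b2 - Phi b1)%:E.
Proof.
move=> s0 b12.
have U : [set` `]-oo, m + b2 * s]] = [set` `]-oo, m + b1 * s]] `|` [set` `]m + b1 * s, m + b2 * s]] :> set R.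
  apply: itv_bndbnd_setU; rewrite ?bnd_simp ?lerD2l ?ler_pM2r //.
have := normal_Phi m s (m + b2 * s) s0.
rewrite U measureU //; last first.
  apply/seteqP; split => // z /= []; rewrite !in_itv /= => H1 /andP[H2 _].
  by move: (lt_le_trans H2 H1); rewrite ltxx.
move=> H.
pose p1 := normal_prob m s `]-oo, m + b1 * s].
pose p2 := normal_prob m s `]m + b1 * s, m + b2 * s].
have {H} : (p1 + p2 = (Phi ((m + b2 * s - m) / s))%:E)%E := H.
have E (b : R) : (m + b * s - m) / s = b by rewrite addrC addKr mulfK // gt_eqF.
rewrite /p1 /p2 normal_Phi // !E.
have : normal_prob m s `]m + b1 * s, m + b2 * s] \is a fin_num by rewrite fin_num_measure.
set q := normal_prob m s _ => fin2 HH.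
have HH2 : Phi b1 + fine q = Phi b2.
  by apply: EFin_inj; rewrite EFinD (fineK fin2).
by rewrite -(fineK fin2) -HH2; congr EFin; ring.
Qed.
Lemma sum2 (f : 'I_2 -> R) : \sum_(i < 2) f i = f 0 + f 1.
Proof.
rewrite !big_ord_recl big_ord0 addr0.
by have -> : lift ord0 ord0 = 1 :> 'I_2 by apply/val_inj.
Qed.

Lemma det2 (A : 'M[R]_2) : \det A = A 0 0 * A 1 1 - A 0 1 * A 1 0.
Proof.
rewrite (expand_det_row _ 0) sum2 /cofactor !det_mx11 !mxE /=.
have -> : lift 0 0 = 1 :> 'I_2 by apply/val_inj.
have -> : lift 1 0 = 0 :> 'I_2 by apply/val_inj.
rewrite expr0 expr1 mul1r mulN1r; ring.
Qed.

Lemma inv2E (A : 'M[R]_2) i j : \det A != 0 ->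
  invmx A i j = ((-1) ^+ (i + j) * A (lift j 0) (lift i 0)) / \det A.
Proof.
move=> dA; rewrite /invmx unitmxE unitfE dA /= !mxE /cofactor det_mx11 !mxE.
by rewrite mulrC addnC.
Qed.

Lemma quad2 (A : 'M[R]_2) (v : 'rV[R]_2) : \det A != 0 ->
  (v *m invmx A *m v^T) 0 0 =
  (A 1 1 * v 0 0 ^+ 2 - (A 0 1 + A 1 0) * v 0 0 * v 0 1 + A 0 0 * v 0 1 ^+ 2) / \det A.
Proof.
move=> dA; rewrite !mxE sum2 !mxE !sum2 !inv2E //.
have -> : lift 0 0 = 1 :> 'I_2 by apply/val_inj.
have -> : lift 1 0 = 0 :> 'I_2 by apply/val_inj.
rewrite /= expr0 expr1 !mul1r (_ : (1 %% 2 + 1 %% 2)%N = 2)// expr2.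
by field.
Qed.

Lemma ord2_cases (j : 'I_2) : j = 0 \/ j = 1.
Proof.
case: j => [[|[|//]] Hj]; [left|right]; exact/val_inj.
Qed.

Lemma eig2 (S : 'M[R]_2) (lam x y : R) : (x != 0) || (y != 0) ->
  lam * x = x * S 0 0 + y * S 1 0 -> lam * y = x * S 0 1 + y * S 1 1 ->
  eigenvalue S lam.
Proof.
move=> nz e0 e1; apply/eigenvalueP.
exists (\row_(i < 2) (if i == 0 then x else y)).
  apply/rowP => j; rewrite !mxE sum2 !mxE /=.
  by case: (ord2_cases j) => ->.
apply/negP => /eqP /rowP H; move: nz.
have := H 0; have := H 1; rewrite !mxE /= => -> ->.
by rewrite eqxx.
Qed.

Lemma eig_facts (S : 'M[R]_2) (c C k : R) : 0 < c -> 0 < k -> S^T = S ->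
  (forall lam, eigenvalue S lam -> c * k <= lam <= C * k) ->
  [/\ c * k <= S 0 0, S 0 0 <= C * k, (c * k) ^+ 2 <= \det S &
      S 0 0 * S 1 1 <= (C * k) ^+ 2].
Proof.
move=> c0 k0 ST H; rewrite det2.
have S10 : S 1 0 = S 0 1 by rewrite -[in LHS]ST mxE.
rewrite S10.
have ck0 : 0 < c * k by rewrite mulr_gt0.
have [b0|b0] := eqVneq (S 0 1) 0.
  have /H /andP[h1 h2] : eigenvalue S (S 0 0).
    apply: (@eig2 _ _ 1 0); first by rewrite oner_neq0.
      by rewrite S10 b0; ring.
    by rewrite b0; ring.
  have /H /andP[h3 h4] : eigenvalue S (S 1 1).
    apply: (@eig2 _ _ 0 1); first by rewrite oner_neq0 orbT.
      by rewrite S10 b0; ring.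
    by rewrite b0; ring.
  rewrite b0; apply: And4 => //; nra.
pose e := Num.sqrt ((S 0 0 - S 1 1) ^+ 2 + 4 * S 0 1 ^+ 2).
have e0 : 0 <= e by exact: sqrtr_ge0.
have ee : e ^+ 2 = (S 0 0 - S 1 1) ^+ 2 + 4 * S 0 1 ^+ 2.
  by rewrite sqr_sqrtr // addr_ge0 ?sqr_ge0 // mulr_ge0 ?sqr_ge0.
have eig (l : R) : l ^+ 2 - (S 0 0 + S 1 1) * l + (S 0 0 * S 1 1 - S 0 1 * S 0 1) = 0 ->
    eigenvalue S l.
  move=> hl; apply: (@eig2 _ _ (S 0 1) (l - S 0 0)); first by rewrite b0.
    by rewrite S10; ring.
  apply/eqP; rewrite -subr_eq0; apply/eqP.
  rewrite -hl; ring.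
have /H /andP[h1 h2] : eigenvalue S ((S 0 0 + S 1 1 - e) / 2).
  apply: eig; apply/eqP; rewrite -subr_eq0; apply/eqP.
    have -> : ((S 0 0 + S 1 1 - e) / 2) ^+ 2 - (S 0 0 + S 1 1) * ((S 0 0 + S 1 1 - e) / 2) + (S 0 0 * S 1 1 - S 0 1 * S 0 1) - 0 = (e ^+ 2 - ((S 0 0 - S 1 1) ^+ 2 + 4 * S 0 1 ^+ 2)) / 4 by field.
  by rewrite ee subrr mul0r.
have /H /andP[h3 h4] : eigenvalue S ((S 0 0 + S 1 1 + e) / 2).
  apply: eig; apply/eqP; rewrite -subr_eq0; apply/eqP.
  have -> : ((S 0 0 + S 1 1 + e) / 2) ^+ 2 - (S 0 0 + S 1 1) * ((S 0 0 + S 1 1 + e) / 2) + (S 0 0 * S 1 1 - S 0 1 * S 0 1) - 0 = (e ^+ 2 - ((S 0 0 - S 1 1) ^+ 2 + 4 * S 0 1 ^+ 2)) / 4 by field.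
  by rewrite ee subrr mul0r.
have ead : `|S 0 0 - S 1 1| <= e.
  have q0 : 0 <= 4 * S 0 1 ^+ 2 by rewrite mulr_ge0 // sqr_ge0.
  by rewrite -sqrtr_sqr ler_sqrt ?lerDl // addr_ge0 // sqr_ge0.
move/ler_normlP: ead => [ea1 ea2].
have det : S 0 0 * S 1 1 - S 0 1 * S 0 1 = ((S 0 0 + S 1 1 - e) / 2) * ((S 0 0 + S 1 1 + e) / 2).
  have -> : ((S 0 0 + S 1 1 - e) / 2) * ((S 0 0 + S 1 1 + e) / 2) = ((S 0 0 + S 1 1) ^+ 2 - e ^+ 2) / 4 by field.
  by rewrite ee; field.
have ha : c * k <= S 0 0 by lra.
have ha' : S 0 0 <= C * k by lra.
have hd : c * k <= S 1 1 by lra.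
have hd' : S 1 1 <= C * k by lra.
split => //.
  rewrite det; move: h1 h3 ck0.
  move: ((S 0 0 + S 1 1 - e) / 2) ((S 0 0 + S 1 1 + e) / 2) (c * k) => x y z hx hy hz.
  nra.
nra.
Qed.
Lemma pdf_factor (S : 'M[R]_2) (mu : 'rV[R]_2) (z : R * R) :
  S 1 0 = S 0 1 -> 0 < S 0 0 -> 0 < \det S ->
  bivariate_normal_pdf mu S z =
  normal_pdf (mu ord0 ord0) (Num.sqrt (S 0 0)) z.1 *
  normal_pdf 0 (Num.sqrt (\det S / S 0 0))
    (z.2 - mu ord0 1 - S 0 1 / S 0 0 * (z.1 - mu ord0 ord0)).
Proof.
move=> S10 a0 D0.
have s1 : Num.sqrt (S 0 0) != 0 by rewrite gt_eqF // sqrtr_gt0.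
have s2 : Num.sqrt (\det S / S 0 0) != 0 by rewrite gt_eqF // sqrtr_gt0 divr_gt0.
rewrite /bivariate_normal_pdf !normal_pdfE // /normal_peak /normal_fun.
have -> : (ord0 : 'I_2) = 0 by apply/val_inj.
rewrite quad2 ?gt_eqF // !mxE /=.
rewrite !sqr_sqrtr ?(ltW a0) ?divr_ge0 ?(ltW a0) ?(ltW D0) //.
set u := z.1 - _; set w := z.2 - _.
have dE : \det S = S 0 0 * S 1 1 - S 0 1 * S 0 1 by rewrite det2 S10.
have pi0 : 0 <= pi *+ 2 :> R by rewrite mulrn_wge0 // pi_ge0.
rewrite mulrACA -expRD [RHS]mulrC S10; congr (expR _ * _).
  rewrite dE; field.
  by rewrite -dE !gt_eqF.
rewrite -invfM -sqrtrM ?mulrn_wge0 ?mulr_ge0 ?pi_ge0 ?(ltW a0) //.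
have -> : S 0 0 * pi *+ 2 * (\det S / S 0 0 * pi *+ 2) = (pi *+ 2) ^+ 2 * \det S.
  by field; rewrite gt_eqF.
by rewrite sqrtrM ?sqr_ge0 // sqrtr_sqr ger0_norm.
Qed.
Lemma key (r q sk sig s g rho S01 u : R) :
  0 < q -> 0 <= sk -> 0 < sig -> 0 < s -> 1 <= g -> 0 <= rho -> 0 < r ->
  rho ^+ 2 * g ^+ 2 = g ^+ 2 - 1 ->
  (q * sk) ^+ 2 <= (g * s) ^+ 2 ->
  S01 ^+ 2 <= (g ^+ 2 - 1) * s ^+ 2 * sig ^+ 2 ->
  2 * (- r / q) * sig < u -> u <= (- r / q) * sig ->
  (- r / q) * (1 + 2 * rho) * g <= (- (r * sk) - S01 / sig ^+ 2 * u) / s.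
Proof.
move=> q0 sk0 sig0 s0 g1 rho0 r0 rhoE hq hS hu1 hu2.
have g0 : 0 < g by lra.
have h1 : q * sk <= g * s.
  by rewrite -ler_sqr ?nnegrE ?mulr_ge0 ?(ltW q0) ?(ltW g0) ?(ltW s0).
have h2 : `|S01| <= rho * g * s * sig.
  rewrite -ler_sqr ?nnegrE ?mulr_ge0 ?(ltW g0) ?(ltW s0) ?(ltW sig0) //.
  rewrite real_normK ?num_real //; apply: le_trans; first exact: hS.
  by rewrite !exprMn -rhoE.
have rq0 : 0 < r / q by rewrite divr_gt0.
have hu : `|u| <= 2 * (r / q) * sig.
  have e1 : 2 * (- r / q) * sig = - (2 * (r / q) * sig) by ring.
  have e2 : (- r / q) * sig = - ((r / q) * sig) by ring.
  have : 0 <= r / q * sig by rewrite mulr_ge0 ?(ltW rq0) ?(ltW sig0).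
  rewrite ler_norml => H0; apply/andP; split; lra.
have h3 : `|S01 / sig ^+ 2 * u| <= 2 * (r / q) * (rho * g * s).
  have sig2 : 0 < sig ^+ 2 by rewrite exprn_gt0.
  have -> : `|S01 / sig ^+ 2 * u| = `|S01| * `|u| / sig ^+ 2.
    by rewrite normrM normrM normfV normrX (ger0_norm (ltW sig0)) mulrAC.
  rewrite ler_pdivrMr //.
  have := ler_pM (normr_ge0 _) (normr_ge0 _) h2 hu.
  have -> : rho * g * s * sig * (2 * (r / q) * sig) = 2 * (r / q) * (rho * g * s) * sig ^+ 2 by ring.
  done.
have h4 : r * sk <= r / q * (g * s).
  have -> : r * sk = r / q * (q * sk) by field; rewrite gt_eqF.
  by rewrite ler_wpM2l // ltW.
rewrite ler_pdivlMr //.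
have h5 : S01 / sig ^+ 2 * u <= 2 * (r / q) * (rho * g * s).
  by apply: le_trans h3; exact: ler_norm.
have e3 : - r / q * (1 + 2 * rho) * g * s = - (r / q * (g * s)) - 2 * (r / q) * (rho * g * s) by ring.
rewrite e3; lra.
Qed.
End Helpers.
Arguments eig_facts {R S c C k}.
Arguments pdf_factor {R S mu z}.
Arguments normal_prob_itv {R m s b1 b2}.

Lemma hq_lem (R : realType) (c C k S00 D : R) : 0 < c -> c <= C -> 0 < k ->
  c * k <= S00 -> S00 <= C * k -> (c * k) ^+ 2 <= D ->
  c * k <= (C / c) ^+ 2 * (D / S00).
Proof.
move=> c0 cC k0 h1 h2 h3.
have S0 : 0 < S00 by apply: lt_le_trans h1; rewrite mulr_gt0.
have -> : (C / c) ^+ 2 * (D / S00) = C ^+ 2 * D / (c ^+ 2 * S00).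
  by field; rewrite !gt_eqF.
rewrite ler_pdivlMr ?mulr_gt0 ?exprn_gt0 //.
have e1 : c * k * (c ^+ 2 * S00) <= c ^+ 3 * C * k ^+ 2.
  have : c * k * (c ^+ 2 * S00) = c ^+ 3 * k * S00 by ring.
  move=> ->; have : c ^+ 3 * C * k ^+ 2 = c ^+ 3 * k * (C * k) by ring.
  move=> ->; rewrite ler_wpM2l // mulr_ge0 // ?exprn_ge0 ?ltW //.
have e2 : c ^+ 3 * C * k ^+ 2 <= C ^+ 2 * (c * k) ^+ 2.
  have -> : C ^+ 2 * (c * k) ^+ 2 = (c ^+ 2 * k ^+ 2 * C) * C by ring.
  have -> : c ^+ 3 * C * k ^+ 2 = (c ^+ 2 * k ^+ 2 * C) * c by ring.
  by rewrite ler_wpM2l // !mulr_ge0 ?exprn_ge0 ?ltW // (lt_le_trans c0 cC).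
have e3 : C ^+ 2 * (c * k) ^+ 2 <= C ^+ 2 * D by rewrite ler_wpM2l // exprn_ge0 // ltW // (lt_le_trans c0 cC).
exact: (le_trans e1 (le_trans e2 e3)).
Qed.

Lemma hS_lem (R : realType) (c C k S00 S01 S11 D : R) : 0 < c -> c <= C -> 0 < S00 ->
  D = S00 * S11 - S01 * S01 -> S00 * S11 <= (C * k) ^+ 2 -> (c * k) ^+ 2 <= D ->
  S01 ^+ 2 <= ((C / c) ^+ 2 - 1) * (D / S00) * S00.
Proof.
move=> c0 cC S0 DE h1 h2.
have -> : ((C / c) ^+ 2 - 1) * (D / S00) * S00 = (C / c) ^+ 2 * D - D by field; rewrite !gt_eqF.
have e1 : (C * k) ^+ 2 <= (C / c) ^+ 2 * D.
  have -> : (C * k) ^+ 2 = (C / c) ^+ 2 * (c * k) ^+ 2 by field; rewrite gt_eqF.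
  by rewrite ler_wpM2l // exprn_ge0 // divr_ge0 // ltW // (lt_le_trans c0 cC).
have : S01 ^+ 2 = S00 * S11 - D by rewrite DE; ring.
move=> ->; lra.
Qed.

Theorem lemma2p10 (R : realType) (n : nat) (c C r : R) (Sigma : 'M[R]_2)
    (mu : 'rV[R]_2) :
  (1 <= n)%N ->
  0 < c -> c <= C ->
  posdef Sigma ->
  (* c n <= lambda_min(Sigma) <= lambda_max(Sigma) <= C n *)
  (forall lam : R, eigenvalue Sigma lam -> c * n%:R <= lam <= C * n%:R) ->
  1 <= r ->
  let t := r * Num.sqrt n%:R in
  let a := - r / Num.sqrt c in
  let rho0 := Num.sqrt (1 - (c / C) ^+ 2) in
  (((Phi a - Phi (2 * a)) * Phi (a * (1 + 2 * rho0) / Num.sqrt (1 - rho0 ^+ 2)))%:E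
  <= bivariate_normal_prob mu Sigma
       ([set z : R * R | (z.1 <= mu ord0 ord0 - t)%R /\ (z.2 <= mu ord0 1 - t)%R]))%E.
Proof.
move=> n1 c0 cC [ST posS] eigH r1.
cbv zeta.
set t := r * Num.sqrt n%:R.
set a := - r / Num.sqrt c.
set rho0 := Num.sqrt (1 - (c / C) ^+ 2).
have k0 : 0 < n%:R :> R by rewrite ltr0n.
have [h00 h00' hD hSS] := eig_facts c0 k0 ST eigH.
have S10 : Sigma 1 0 = Sigma 0 1 by rewrite -[in LHS]ST mxE.
have ck0 : 0 < c * n%:R by rewrite mulr_gt0.
have a0 : 0 < Sigma 0 0 by exact: lt_le_trans h00.
have D0 : 0 < \det Sigma by apply: lt_le_trans hD; rewrite exprn_gt0.
have r0 : 0 < r by lra.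
have q0 : 0 < Num.sqrt c by rewrite sqrtr_gt0.
have C0 : 0 < C by exact: lt_le_trans cC.
set m1 := mu ord0 ord0; set m2 := mu ord0 1.
pose sig := Num.sqrt (Sigma 0 0).
pose s := Num.sqrt (\det Sigma / Sigma 0 0).
pose be := Sigma 0 1 / Sigma 0 0.
have sig0 : 0 < sig by rewrite sqrtr_gt0.
have s0 : 0 < s by rewrite sqrtr_gt0 divr_gt0.
pose K := Phi (a * (1 + 2 * rho0) / Num.sqrt (1 - rho0 ^+ 2)).
have K0 : 0 <= K by exact: Phi_ge0.
pose T1 := m1 - t; pose T2 := m2 - t.
pose A := `]-oo, T1] `*` `]-oo, T2].
have AE : [set z : R * R | z.1 <= m1 - t /\ z.2 <= m2 - t] = A.
  by apply/seteqP; split => z; rewrite /A /= !in_itv /=.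
rewrite /bivariate_normal_prob AE integral_mkcond.
pose f := fun z : R * R => (bivariate_normal_pdf mu Sigma z)%:E.
have fE z : bivariate_normal_pdf mu Sigma z =
    normal_pdf m1 sig z.1 * normal_pdf 0 s (z.2 - m2 - be * (z.1 - m1)).
  exact: pdf_factor.
have mA : measurable A by apply: measurableX.
have mf : measurable_fun setT f.
  rewrite /f; apply/measurable_EFinP.
  have -> : bivariate_normal_pdf mu Sigma = fun z =>
      normal_pdf m1 sig z.1 * normal_pdf 0 s (z.2 - m2 - be * (z.1 - m1)).
    by apply/funext => z; exact: fE.
  apply: measurable_funM.
    exact: (measurableT_comp (measurable_normal_pdf _ _) measurable_fst).
  apply: (measurableT_comp (measurable_normal_pdf _ _)).
  apply: measurable_funB.
    by apply: measurable_funB; [exact: measurable_snd|exact: measurable_cst].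
  apply: measurable_funM; first exact: measurable_cst.
  by apply: measurable_funB; [exact: measurable_fst|exact: measurable_cst].
have mg : measurable_fun setT (f \_ A).
  by apply/(measurable_restrictT _ mA); exact: measurable_funTS.
have g0 : forall z, (0 <= (f \_ A) z)%E.
  move=> z; rewrite patchE; case: ifP => // _.
  by rewrite /f lee_fin fE mulr_ge0 // normal_pdf_ge0.
rewrite -/f (fubini_tonelli1 (m1:=lebesgue_measure) (m2:=lebesgue_measure) _ mg g0).
have a_le0 : a <= 0.
  by rewrite /a mulNr oppr_le0 divr_ge0 // ltW.
pose J := `]m1 + (2 * a) * sig, m1 + a * sig].
have mJ : measurable [set` J] by [].
pose h := (fun x : R => (K * normal_pdf m1 sig x)%:E) \_ [set` J].
have hval : (((Phi a - Phi (2 * a)) * K)%:E = \int[lebesgue_measure]_x h x)%E.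
  rewrite /h -integral_mkcond.
  under eq_integral do rewrite EFinM.
  rewrite ge0_integralZl //.
  - have -> : (\int[lebesgue_measure]_(x in [set` J]) (normal_pdf m1 sig x)%:E)%E =
      normal_prob m1 sig [set` J] by [].
    rewrite normal_prob_itv // -?EFinM 1?mulrC //.
    lra.
  - by apply: measurable_funTS; apply/measurable_EFinP; exact: measurable_normal_pdf.
  - by move=> x _; rewrite lee_fin normal_pdf_ge0.
rewrite hval.
apply: ge0_le_integral => //.
- by move=> x _; rewrite /h patchE; case: ifP => // _; rewrite lee_fin mulr_ge0 // normal_pdf_ge0.
- apply/(measurable_restrictT _ mJ); apply: measurable_funTS; apply/measurable_EFinP.
  by apply: measurable_funM; [exact: measurable_cst|exact: measurable_normal_pdf].
- exact: measurable_fun_fubini_tonelli_F.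
move=> x _; rewrite /h patchE; case: ifPn => xJ; last first.
  by apply: integral_ge0 => y _; exact: g0.
move: xJ; rewrite inE /= in_itv /= => /andP[xl xr].
have hsq : Num.sqrt n%:R * Num.sqrt c <= sig.
  rewrite -sqrtrM ?ler0n // ler_sqrt; last exact: ltW a0.
  by rewrite mulrC.
have hat : a * sig <= - t.
  have -> : a * sig = - (r * (sig / Num.sqrt c)) by rewrite /a; ring.
  by rewrite lerN2 ler_wpM2l ?(ltW r0) // ler_pdivlMr.
have xT1 : x <= T1 by rewrite /T1; lra.
have sne : s != 0 by rewrite gt_eqF.
rewrite /fubini_F.
have gE : (fun y => (f \_ A) (x, y)) = (fun y => ((normal_pdf m1 sig x *
    normal_pdf 0 s (y - m2 - be * (x - m1)))%:E)) \_ [set` `]-oo, T2]].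
  apply/funext => y; rewrite !patchE.
  have [H|H] := boolP ((x, y) \in A); case: ifPn => H2 //.
  - by rewrite /f fE.
  - move/set_mem: H => [_ /= Hy]; move/negP: H2 => H2.
    by exfalso; apply: H2; exact: mem_set.
  - move/negP: H => H; exfalso; apply: H; apply/mem_set; split => //=.
    exact: set_mem H2.
rewrite gE -integral_mkcond.
under eq_integral do rewrite EFinM.
rewrite ge0_integralZl //; last 3 first.
- apply: measurable_funTS; apply/measurable_EFinP.
  apply: (measurableT_comp (measurable_normal_pdf _ _)).
  apply: measurable_funB; last exact: measurable_cst.
  by apply: measurable_funB; [exact: measurable_id|exact: measurable_cst].
- by move=> y _; rewrite lee_fin normal_pdf_ge0.
- by rewrite lee_fin normal_pdf_ge0.
under eq_integral => y _ do rewrite -addrA -opprD (normal_pdf_shift _ _ s _ sne).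
rewrite [X in (_ * X)%E](_ : _ = normal_prob (m2 + be * (x - m1)) s `]-oo, T2]) //.
rewrite normal_Phi // -EFinM lee_fin mulrC ler_wpM2l ?normal_pdf_ge0 //.
apply: Phi_le.
have cC0 : 0 <= c / C by rewrite divr_ge0 // ltW.
have cC1 : c / C <= 1 by rewrite ler_pdivrMr // mul1r.
have rho0sq : rho0 ^+ 2 = 1 - (c / C) ^+ 2.
  rewrite sqr_sqrtr // subr_ge0 expr_le1 //.
have E1 : Num.sqrt (1 - rho0 ^+ 2) = c / C.
  by rewrite rho0sq (_ : 1 - (1 - (c / C) ^+ 2) = (c / C) ^+ 2) ?sqrtr_sqr ?ger0_norm //; ring.
have g1 : 1 <= C / c by rewrite ler_pdivlMr // mul1r.
have EL : a * (1 + 2 * rho0) / Num.sqrt (1 - rho0 ^+ 2) =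
    (- r / Num.sqrt c) * (1 + 2 * rho0) * (C / c).
  by rewrite E1 invf_div.
have sig2 : sig ^+ 2 = Sigma 0 0 by rewrite sqr_sqrtr // ltW.
have ER : (T2 - (m2 + be * (x - m1))) / s =
    (- (r * Num.sqrt n%:R) - Sigma 0 1 / sig ^+ 2 * (x - m1)) / s.
  by rewrite sig2 /T2 /t /be; congr (_ / _); ring.
rewrite EL ER.
apply: key => //.
- by rewrite /rho0 sqrtr_ge0.
- rewrite (_ : rho0 ^+ 2 = 1 - (c / C) ^+ 2); last exact: rho0sq.
  by field; rewrite !gt_eqF.
- rewrite !exprMn !sqr_sqrtr ?ler0n ?(ltW c0) ?divr_ge0 ?(ltW D0) ?(ltW a0) //.
  by rewrite -exprMn; exact: hq_lem.
- rewrite sig2 /s sqr_sqrtr ?divr_ge0 ?(ltW D0) ?(ltW a0) //.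
  apply: (@hS_lem R c C n%:R (Sigma 0 0) (Sigma 0 1) (Sigma 1 1) (\det Sigma) c0 cC a0 _ hSS hD).
  by rewrite det2 S10.
- by move: xl; rewrite /a; lra.
- by move: xr; rewrite /a; lra.
Qed.
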